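(* Let $\Omega$ be a metrizable compact space and $c$ a capacity on $\mathcal{L}$. Then the Banach space $L^1(c)$ is separable and the unit ball of $L^1(c)^*$ is metrizable compact for the weak* topology $\sigma(L^1(c)^*,L^1(c))$.
   Context: $\mathcal{L}\subset\mathcal{C}_b(\Omega)$ is a linear subspace which is a vector lattice, contains the constants and generates the topology. A capacity on $\mathcal{L}$ is a seminorm $c$ with $c(f)\le c(g)$ whenever $|f|\le|g|$ and $\inf_n c(f_n)=0$ for $f_n\in\mathcal{L}$ decreasing to $0$; it is extended to all functions by $c(f)=\sup\{c(\varphi):\varphi\in\mathcal{L},0\le\varphi\le f\}$ for $f\ge0$ l.s.c. and $c(g)=\inf\{c(f):f\text{ l.s.c.},f\ge|g|\}$. $L^1(c)$ is the Banach space obtained as the quotient by $c$-null elements of the $c$-closure of $\mathcal{L}$ in $\{g:c(g)<\infty\}$ (it contains $\mathcal{C}_b(\Omega)$). *)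

(* Defs.v *)
From HB Require Import structures.
From mathcomp Require Import all_boot all_order all_algebra.
From mathcomp Require Import all_classical all_reals all_analysis.
Set Implicit Arguments. Unset Strict Implicit. Unset Printing Implicit Defensive.
Import Order.TTheory GRing.Theory Num.Theory.
Import numFieldNormedType.Exports.
Local Open Scope classical_set_scope.
Local Open Scope ring_scope.

Section Defs.
Context {R : realType} {Omega : topologicalType}.

Definition bounded_continuous (f : Omega -> R) : Prop :=
  continuous f /\ exists M : R, forall x, `|f x| <= M.

Definition admissible_space (L : set (Omega -> R)) : Prop :=
  [/\ (forall f, L f -> bounded_continuous f),
      (forall a (f g : Omega -> R), L f -> L g -> L (fun x => a * f x + g x)),
      (forall f g, L f -> L g ->
          L (fun x => Num.max (f x) (g x)) /\ L (fun x => Num.min (f x) (g x))),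
      (forall a : R, L (fun _ => a)) &
      (* the topology of Omega is the initial topology of L *)
      (forall (x : Omega) (U : set Omega), nbhs x U ->
         exists (s : seq (Omega -> R)) (e : R), [/\ (forall f, f \in s -> L f), 0 < e &
           [set y | forall f, f \in s -> `|f y - f x| < e] `<=` U])].

Definition capacity (L : set (Omega -> R)) (c : (Omega -> R) -> R) : Prop :=
  [/\ (forall f g, L f -> L g -> c (fun x => f x + g x) <= c f + c g),
      (forall a f, L f -> c (fun x => a * f x) = `|a| * c f),
      (forall f g, L f -> L g -> (forall x, `|f x| <= `|g x|) -> c f <= c g) &
      (forall fn : nat -> (Omega -> R),
         (forall n, L (fn n)) ->
         (forall n x, fn n.+1 x <= fn n x) ->
         (forall x, fn n x @[n --> \oo] --> 0) ->
         forall e : R, 0 < e -> exists n, c (fn n) < e)].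

Local Open Scope ereal_scope.

Definition cap_lsc (L : set (Omega -> R)) (c : (Omega -> R) -> R)
  (f : Omega -> \bar R) : \bar R :=
  ereal_sup [set (c phi)%:E | phi in
    [set phi | L phi /\ forall x, (0 <= phi x)%R /\ (phi x)%:E <= f x]].

Definition cap_ext (L : set (Omega -> R)) (c : (Omega -> R) -> R)
  (g : Omega -> R) : \bar R :=
  ereal_inf [set cap_lsc L c f | f in
    [set f : Omega -> \bar R | lower_semicontinuous f /\
       forall x, (`|g x|)%:E <= f x]].

(* the c-closure of L in {g : c(g) < oo}; L^1(c) is its quotient by c-null
   functions *)
Definition L1set (L : set (Omega -> R)) (c : (Omega -> R) -> R) :
  set (Omega -> R) :=
  [set g | cap_ext L c g < +oo /\
     forall e : R, (0 < e)%R -> exists2 phi, L phi &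
        cap_ext L c (fun x => g x - phi x)%R < e%:E].

(* the closed unit ball of the dual L^1(c)^*, represented as the linear
   functionals phi on L1set with |phi g| <= c(g), normalized to vanish
   outside L1set *)
Definition dual_unit_ball (L : set (Omega -> R)) (c : (Omega -> R) -> R) :
  set ((Omega -> R) -> R) :=
  [set phi | [/\ (forall a g h, L1set L c g -> L1set L c h ->
                   phi (fun x => a * g x + h x)%R = (a * phi g + phi h)%R),
                 (forall g, L1set L c g -> (`|phi g|)%:E <= cap_ext L c g) &
                 (forall g, ~ L1set L c g -> phi g = 0%R)]].
End Defs.

Definition metrizable_subset {R : realType} {T : topologicalType} (A : set T)
  : Prop :=
  exists d : T -> T -> R,
    [/\ (forall x y, A x -> A y -> (d x y = 0 <-> x = y)),
        (forall x y, A x -> A y -> d x y = d y x),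
        (forall x y z, A x -> A y -> A z -> d x z <= d x y + d y z) &
        (forall x (U : set T), A x ->
           ((exists V, [/\ open V, V x & V `&` A `<=` U]) <->
            (exists2 e : R, 0 < e & [set y | A y /\ d x y < e] `<=` U)))].

(* Main.v *)
Set Implicit Arguments. Unset Strict Implicit. Unset Printing Implicit Defensive.
Require Import Defs.
From HB Require Import structures.
From mathcomp Require Import all_boot all_order all_algebra.
From mathcomp Require Import all_classical all_reals all_analysis.
From mathcomp Require Import ring lra.
Import Order.TTheory GRing.Theory Num.Theory.
Import numFieldNormedType.Exports.
Local Open Scope classical_set_scope.
Local Open Scope ring_scope.

Section Cap.
Context {R : realType} {Omega : pseudoMetricType R}.
Variables (L : set (Omega -> R)) (c : (Omega -> R) -> R).
Hypothesis hL : admissible_space L.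
Hypothesis hc : capacity L c.

Lemma L_cst a : L (fun _ => a).
Proof. by case: hL. Qed.

Lemma L_comb a f g : L f -> L g -> L (fun x => a * f x + g x).
Proof. by case: hL => _ h _ _ _; apply: h. Qed.

Lemma L_eq f g : (forall x, f x = g x) -> L f -> L g.
Proof. by move=> h; have -> : f = g by apply/funext. Qed.

Lemma L_add f g : L f -> L g -> L (fun x => f x + g x).
Proof. by move=> Lf Lg; apply: (L_eq _ (L_comb 1 Lf Lg)) => x; rewrite mul1r. Qed.

Lemma L_sub f g : L f -> L g -> L (fun x => f x - g x).
Proof.
by move=> Lf Lg; apply: (L_eq _ (L_comb (-1) Lg Lf)) => x; rewrite mulN1r addrC.
Qed.

Lemma L_max f g : L f -> L g -> L (fun x => Num.max (f x) (g x)).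
Proof. by case: hL => _ _ h _ _ Lf Lg; case: (h _ _ Lf Lg). Qed.

Lemma L_bnd f : L f -> exists M, forall x, `|f x| <= M.
Proof. by case: hL => h _ _ _ _ /h []. Qed.

Lemma c_mono f g : L f -> L g -> (forall x, `|f x| <= `|g x|) -> c f <= c g.
Proof. by case: hc => _ _ h _; apply: h. Qed.

Lemma c_sub f g : L f -> L g -> c (fun x => f x + g x) <= c f + c g.
Proof. by case: hc => h _ _ _; apply: h. Qed.

Lemma c_eq f g : (forall x, f x = g x) -> c f = c g.
Proof. by move=> h; have -> : f = g by apply/funext. Qed.

Lemma c0 : c (fun _ => 0) = 0.
Proof.
case: hc => _ h _ _; have E := h 0 (fun _ => 0%R) (L_cst 0).
have E2 : c (fun x => 0 * (fun _ : Omega => 0%R) x) = c (fun _ => 0).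
  by apply: c_eq => x; rewrite mul0r.
by rewrite -E2 E normr0 mul0r.
Qed.

Lemma c_ge0 f : L f -> 0 <= c f.
Proof.
move=> Lf; rewrite -c0; apply: c_mono => // [|x]; first exact: L_cst.
by rewrite normr0.
Qed.

Lemma c_cst d : 0 <= d -> c (fun _ => d) = d * c (fun _ => 1).
Proof.
case: hc => _ h _ _ d0; have E := h d (fun _ => 1%R) (L_cst 1).
have E2 : c (fun x => d * (fun _ : Omega => 1%R) x) = c (fun _ => d).
  by apply: c_eq => x; rewrite mulr1.
by rewrite -E2 E ger0_norm.
Qed.

Local Open Scope ereal_scope.

Lemma cap_lsc_ge0 (f : Omega -> \bar R) : (forall x, 0 <= f x) -> 0 <= cap_lsc L c f.
Proof.
move=> f0; apply: le_ereal_sup_tmp; exists 0%:E => //.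
exists (fun _ => 0%R); last by rewrite c0.
by split; [exact: L_cst | move=> x; split => //].
Qed.

Lemma cap_ext_ge0 g : 0 <= cap_ext L c g.
Proof.
apply: le_ereal_inf_tmp => _ [f [_ hf] <-]; apply: cap_lsc_ge0 => x.
exact: le_trans (hf x).
Qed.

Lemma lsc_cst (M : \bar R) : lower_semicontinuous (fun _ : Omega => M).
Proof. by move=> x a h; exists setT => //; exact: filterT. Qed.

Lemma cap_lsc_cst (M : R) : cap_lsc L c (fun _ => M%:E) <= (c (fun _ => M))%:E.
Proof.
apply: ge_ereal_sup => _ [phi [Lphi hphi] <-]; rewrite lee_fin.
apply: c_mono => // [|x]; first exact: L_cst.
have [h0 h1] := hphi x; rewrite ger0_norm //; rewrite lee_fin in h1.
exact: le_trans h1 (ler_norm _).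
Qed.

Lemma cap_ext_le g (f : Omega -> \bar R) : lower_semicontinuous f -> (forall x, (`|g x|)%:E <= f x) ->
  cap_ext L c g <= cap_lsc L c f.
Proof. by move=> lf hf; apply: ereal_inf_lbound; exists f. Qed.

Lemma cap_ext_bnd g (M : R) : (forall x, (`|g x| <= M)%R) ->
  cap_ext L c g <= (c (fun _ => M))%:E.
Proof.
move=> hM; apply: le_trans (cap_lsc_cst M); apply: cap_ext_le.
  exact: lsc_cst.
by move=> x; rewrite lee_fin.
Qed.

Lemma lsc_addc (f : Omega -> \bar R) (d : R) : lower_semicontinuous f ->
  lower_semicontinuous (fun x => f x + d%:E).
Proof.
move=> lf x a; rewrite -lteBlDr // -EFinB => /lf [V Vx HV].
by exists V => // y /HV; rewrite EFinB lteBlDr.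
Qed.

Lemma cap_lsc_shift (f : Omega -> \bar R) (d : R) : (0 <= d)%R -> (forall x, 0 <= f x) ->
  cap_lsc L c (fun x => f x + d%:E) <= cap_lsc L c f + (c (fun _ => d))%:E.
Proof.
move=> d0 f0; apply: ge_ereal_sup => _ [psi [Lpsi hpsi] <-].
pose psi' := fun x => Num.max (psi x - d)%R 0%R.
have Lpsi' : L psi' by apply: L_max; [apply: L_sub => //; exact: L_cst|exact: L_cst].
have h1 : (c psi')%:E <= cap_lsc L c f.
  apply: ereal_sup_ubound; exists psi' => //; split => // x; split.
    by rewrite /psi' le_max lexx orbT.
  have [h0 h2] := hpsi x; rewrite /psi'; case: (leP (psi x - d)%R 0%R) => hx.
    exact: f0.
  by rewrite EFinB leeBlDr.
apply: (@le_trans _ _ ((c psi' + c (fun _ => d))%:E)); last first.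
  by rewrite EFinD leeD2r.
rewrite lee_fin; apply: le_trans (c_sub Lpsi' (L_cst d)).
apply: c_mono => //; first by apply: L_add => //; exact: L_cst.
move=> x; have [h0 _] := hpsi x; rewrite ger0_norm // ger0_norm.
  by rewrite /psi' -lerBlDr le_max lexx.
by apply: addr_ge0 => //; rewrite /psi' le_max lexx orbT.
Qed.

Lemma cap_ext_shift g h (d : R) : (0 <= d)%R ->
  (forall x, (`|h x| <= `|g x| + d)%R) ->
  cap_ext L c h <= cap_ext L c g + (c (fun _ => d))%:E.
Proof.
move=> d0 hx; rewrite -leeBlDr //; apply: le_ereal_inf_tmp => _ [f [lf hf] <-].
rewrite leeBlDr //; apply: le_trans (cap_lsc_shift d0 _); last first.
  by move=> x; exact: le_trans (hf x).
apply: cap_ext_le; first exact: lsc_addc.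
by move=> x; apply: le_trans (leeD2r _ (hf x)); rewrite -EFinD lee_fin.
Qed.


Lemma c_cst_small (e : R) : (0 < e)%R ->
  exists2 d : R, (0 < d)%R & (c (fun _ => d) < e)%R.
Proof.
move=> e0; have c1 : (0 <= c (fun _ => 1%R))%R by apply: c_ge0; exact: L_cst.
exists (e / (c (fun _ => 1%R) + 1))%R.
  by apply: divr_gt0 => //; apply: ltr_wpDl.
rewrite c_cst; last by apply: divr_ge0; [exact: ltW|apply: addr_ge0].
rewrite mulrAC ltr_pdivrMr; last by apply: ltr_wpDl.
by rewrite ltr_pM2l // ltrDl.
Qed.

Lemma L_in_L1 phi : L phi -> L1set L c phi.
Proof.
move=> Lphi; have [M hM] := L_bnd Lphi; split.
  by apply: le_lt_trans (cap_ext_bnd hM) _; exact: ltey.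
move=> e e0; exists phi => //.
apply: le_lt_trans (cap_ext_bnd (M := 0%R) _) _.
  by move=> x; rewrite subrr normr0.
by rewrite c0 lte_fin.
Qed.

Lemma cap_ext_fin g : L1set L c g -> cap_ext L c g \is a fin_num.
Proof.
case=> h _; rewrite ge0_fin_numE //; exact: cap_ext_ge0.
Qed.

Lemma L1_subL g d : L1set L c g -> L d -> L1set L c (fun x => g x - d x)%R.
Proof.
move=> [hg ha] Ld; have [M hM] := L_bnd Ld; split.
  have := @cap_ext_shift g (fun x => g x - d x)%R `|M|%R (normr_ge0 _).
  move=> /(_ _)/le_lt_trans; apply.
    move=> x; apply: le_trans (ler_normB _ _) _; rewrite lerD2l.
    exact: le_trans (hM x) (ler_norm _).
  by rewrite lte_add_pinfty // ltey.
move=> e e0; have [psi Lpsi hpsi] := ha e e0.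
exists (fun x => psi x - d x)%R; first exact: L_sub.
by rewrite (_ : (fun x => _) = (fun x => g x - psi x)%R) //; apply/funext => x; lra.
Qed.

Lemma L1_approx (E : set (Omega -> R)) g (e : R) : L1set L c g -> (0 < e)%R ->
  (forall phi, L phi -> forall d : R, (0 < d)%R ->
     exists2 p, E p & forall x, (`|phi x - p x| <= d)%R) ->
  exists2 p, E p & cap_ext L c (fun x => g x - p x)%R < e%:E.
Proof.
move=> [_ ha] e0 hE.
have e20 : (0 < e / 2)%R by apply: divr_gt0.
have [psi Lpsi hpsi] := ha _ e20.
have [d d0 hd] := c_cst_small e20.
have [p Ep hp] := hE _ Lpsi _ d0.
exists p => //.
have := @cap_ext_shift (fun x => g x - psi x)%R (fun x => g x - p x)%R d (ltW d0).
move=> /(_ _)/le_lt_trans; apply.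
  move=> x; apply: le_trans _ (lerD (lexx _) (hp x)).
  by rewrite (_ : (g x - p x = (g x - psi x) + (psi x - p x))%R) ?ler_normD //; lra.
rewrite (_ : e = e / 2 + e / 2)%R; last by field.
by rewrite EFinD lteD // lte_fin.
Qed.

End Cap.

Section Nets.
Context {R : realType} {Omega : pseudoMetricType R}.
Hypothesis hK : compact [set: Omega].

Lemma finite_ball_cover (rad : Omega -> R) : (forall x, 0 < rad x) ->
  exists s : seq Omega, forall y, exists2 x, x \in s & ball x (rad x) y.
Proof.
move=> rad0; apply: contrapT => ncov.
pose B (s : seq Omega) := [set y | forall x, x \in s -> ~ ball x (rad x) y].
have FF : Filter (filter_from [set: seq Omega] B).
  apply: filter_from_filter; first by exists [::].
  move=> s1 s2 _ _; exists (s1 ++ s2) => // y hy; split => x xs;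
    by apply: hy; rewrite mem_cat xs ?orbT.
have PF : ProperFilter (filter_from [set: seq Omega] B).
  apply: filter_from_proper => s _; apply/set0P/negP => /eqP B0.
  apply: ncov; exists s => y; apply: contrapT => hy.
  have : B s y by move=> x xs bxy; apply: hy; exists x.
  by rewrite B0.
have [x [_ clx]] := hK PF (filterT).
have [y [By bxy]] := clx (B [:: x]) (ball x (rad x)) (ex_intro2 _ _ [:: x] I (@subset_refl _ _)) (nbhsx_ballx _ _ (rad0 x)).
by apply: (By x) => //; rewrite inE.
Qed.

Lemma seq_lb (s : seq Omega) (rad : Omega -> R) : (forall x, 0 < rad x) ->
  exists2 r, 0 < r & forall x, x \in s -> r <= rad x.
Proof.
move=> rad0; elim: s => [|a s [r r0 hr]]; first by exists 1.
exists (Num.min r (rad a)); first by rewrite lt_min r0 rad0.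
move=> x; rewrite inE => /orP [/eqP ->|xs]; first by rewrite ge_min lexx orbT.
by rewrite ge_min hr.
Qed.

Lemma unif_cont (phi : Omega -> R) : continuous phi ->
  forall e, 0 < e -> exists2 r, 0 < r &
    forall x y, ball x r y -> `|phi x - phi y| < e.
Proof.
move=> cphi e e0; have e20 : 0 < e / 2 by apply: divr_gt0.
have H : forall x, exists r, 0 < r /\
    forall y, ball x (r + r) y -> `|phi x - phi y| < e / 2.
  move=> x; have := cphi x (ball (phi x) (e / 2)) (nbhsx_ballx _ _ e20).
  move=> /nbhs_ballP [r0 /= r00 hr0].
  exists (r0 / 2); split; first exact: divr_gt0.
  by move=> y; rewrite -splitr => /hr0.
pose rad x := projT1 (cid (H x)).
have rad0 x : 0 < rad x by rewrite /rad; case: cid => ? [].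
have radP x : forall y, ball x (rad x + rad x) y -> `|phi x - phi y| < e / 2.
  by rewrite /rad; case: cid => ? [].
have [s hs] := finite_ball_cover rad0.
have [r r0 hr] := seq_lb s rad0.
exists r => // y z yz.
have [x xs xy] := hs y.
have xz : ball x (rad x + rad x) z.
  by apply: (le_ball (e1 := rad x + r)); [rewrite lerD2l hr|exact: ball_triangle xy yz].
have xy' : ball x (rad x + rad x) y.
  by apply: (le_ball (e1 := rad x)) => //; rewrite lerDl ltW.
have h1 := radP _ _ xy'; have h2 := radP _ _ xz.
rewrite (splitr e); apply: le_lt_trans (ltrD h1 h2).
rewrite (_ : phi y - phi z = - (phi x - phi y) + (phi x - phi z)); last by ring.
by apply: le_trans (ler_normD _ _) _; rewrite normrN.
Qed.


Lemma rat_approx (t eta : R) : 0 < eta -> exists q : rat, `|t - ratr q| < eta.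
Proof.
move=> eta0; have : t - eta < t + eta by lra.
move=> /rat_in_itvoo [q]; rewrite in_itv /= => /andP [h1 h2].
by exists q; rewrite ltr_norml; apply/andP; split; lra.
Qed.

Lemma dense_seq (L : set (Omega -> R)) :
  (forall f, L f -> continuous f) -> L (fun _ => 0) ->
  exists e : nat -> (Omega -> R), (forall n, L (e n)) /\
    forall phi, L phi -> forall d, 0 < d ->
      exists n, forall x, `|phi x - e n x| <= d.
Proof.
move=> Lc L0.
have Nm : forall m : nat, exists s : seq Omega,
    forall y, exists2 x, x \in s & ball x (m.+1%:R^-1) y.
  by move=> m; apply: (@finite_ball_cover (fun _ => m.+1%:R^-1)).
pose N m := projT1 (cid (Nm m)).
have NP m : forall y, exists2 x, x \in N m & ball x (m.+1%:R^-1) y.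
  by rewrite /N; case: cid.
pose P (j : nat * nat * seq rat) (d : Omega -> R) :=
  [/\ L d, (forall y z, ball y (j.1.1.+1%:R^-1) z -> `|d y - d z| < j.1.2.+1%:R^-1) &
     (forall x, x \in N j.1.1 ->
        `|d x - ratr (nth 0 j.2 (index x (N j.1.1)))| < j.1.2.+1%:R^-1)].
pose pick j := match pselect (exists d, P j d) with
  | left h => projT1 (cid h) | right _ => fun _ => 0 end.
have pickL j : L (pick j).
  by rewrite /pick; case: pselect => // h; case: cid => ? [].
have pickP j : (exists d, P j d) -> P j (pick j).
  by rewrite /pick; case: pselect => // h _; case: cid.
pose e n := match @unpickle (nat * nat * seq rat)%type n with
  | Some j => pick j | None => fun _ => 0 end.
exists e; split.
  by move=> n; rewrite /e; case: unpickle.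
move=> phi Lphi d d0.
have d40 : 0 < d / 4 by apply: divr_gt0.
have [k hk] := ltr_add_invr d40; rewrite add0r in hk.
set eta := k.+1%:R^-1 in hk.
have eta0 : 0 < eta by rewrite /eta invr_gt0.
have [r r0 hr] := unif_cont (Lc _ Lphi) eta0.
have [m hm] := ltr_add_invr r0; rewrite add0r in hm.
have ap t : exists q : rat, `|t - ratr q| < eta by apply: rat_approx.
pose approx t := projT1 (cid (ap t)).
have approxP t : `|t - ratr (approx t)| < eta by rewrite /approx; case: cid.
pose q := [seq approx (phi x) | x <- N m].
pose j := (m, k, q).
have Pphi : P j phi.
  split => //.
    move=> y z yz; apply: hr; exact: le_ball (ltW hm) _ yz.
  move=> x xN; rewrite /= /q (nth_map x); last by rewrite index_mem.
  by rewrite nth_index.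
have [hL hb hn] := pickP j (ex_intro _ _ Pphi).
exists (pickle j); rewrite /e pickleK => y.
have [x xN xy] := NP m y.
have h1 := hr _ _ (le_ball (ltW hm) xy).
have h2 := hb _ _ xy.
have h3 := hn _ xN.
have h4 : `|phi x - ratr (nth 0 q (index x (N m)))| < eta.
  by rewrite /q (nth_map x) ?index_mem // nth_index.
move: h1 h2 h3 h4; rewrite /= -/eta !ltr_norml ler_norml.
move=> /andP[h1 h1'] /andP[h2 h2'] /andP[h3 h3'] /andP[h4 h4'].
apply/andP; split; lra.
Qed.

End Nets.


Lemma abs_small_eq0 {R : realType} (x : R) : (forall eps, 0 < eps -> `|x| <= eps) -> x = 0.
Proof.
move=> h; apply/normr0_eq0/eqP; rewrite eq_le normr_ge0 andbT.
by apply/ler_addgt0Pr => e e0; rewrite add0r; exact: h.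
Qed.

Section Dual.
Context {R : realType} {Omega : pseudoMetricType R}.
Variables (L : set (Omega -> R)) (c : (Omega -> R) -> R).
Hypothesis hL : admissible_space L.
Hypothesis hc : capacity L c.
Variable e : nat -> (Omega -> R).
Hypothesis eL : forall n, L (e n).
Hypothesis edense : forall phi, L phi -> forall d, 0 < d ->
      exists n, forall x, `|phi x - e n x| <= d.

Local Notation B := (dual_unit_ball L c).
Local Notation T := {ptws (Omega -> R) -> R}.

Lemma B_lin (phi : (Omega -> R) -> R) a g h : B phi -> L1set L c g -> L1set L c h ->
  phi (fun x => a * g x + h x) = a * phi g + phi h.
Proof. by case=> H _ _; apply: H. Qed.

Lemma B_bnd (phi : (Omega -> R) -> R) g : B phi -> L1set L c g ->
  ((`|phi g|)%:E <= cap_ext L c g)%E.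
Proof. by case=> _ H _; apply: H. Qed.

Lemma B_out (phi : (Omega -> R) -> R) g : B phi -> ~ L1set L c g -> phi g = 0.
Proof. by case=> _ _ H; apply: H. Qed.

Lemma B_diff (phi : (Omega -> R) -> R) g d : B phi -> L1set L c g -> L d ->
  ((`|phi g - phi d|)%:E <= cap_ext L c (fun x => g x - d x)%R)%E.
Proof.
move=> Bphi g1 Ld.
have d1 := L_in_L1 hL hc Ld.
have E : phi (fun x => -1 * d x + g x) = -1 * phi d + phi g by apply: B_lin.
have E2 : (fun x => -1 * d x + g x) = (fun x => g x - d x).
  by apply/funext => x; rewrite mulN1r addrC.
rewrite E2 mulN1r addrC in E; rewrite -E.
by apply: B_bnd => //; exact: L1_subL.
Qed.

Lemma approx_n g eps : L1set L c g -> 0 < eps ->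
  exists n, (cap_ext L c (fun x => g x - e n x)%R < eps%:E)%E.
Proof.
move=> g1 eps0.
have hE : forall phi, L phi -> forall d, 0 < d ->
    exists2 p, range e p & forall x, `|phi x - p x| <= d.
  by move=> phi Lphi d d0; have [n hn] := edense Lphi d0; exists (e n) => //; exists n.
have [p [n _ <-] hp] := L1_approx hL hc g1 eps0 hE.
by exists n.
Qed.

Lemma coord_close (phi psi : (Omega -> R) -> R) g eps : B phi -> B psi -> L1set L c g ->
  0 < eps -> exists n, forall eta, `|phi (e n) - psi (e n)| < eta ->
     `|phi g - psi g| < eps + eps + eta.
Proof.
move=> Bphi Bpsi g1 eps0; have [n hn] := approx_n g1 eps0.
exists n => eta h.
have h1 := le_lt_trans (B_diff Bphi g1 (eL n)) hn.
have h2 := le_lt_trans (B_diff Bpsi g1 (eL n)) hn.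
rewrite lte_fin in h1; rewrite lte_fin in h2.
move: h1 h2 h; rewrite !ltr_norml => /andP[h1 h1'] /andP[h2 h2'] /andP[h3 h3'].
apply/andP; split; lra.
Qed.

Lemma B_eq (phi psi : (Omega -> R) -> R) : B phi -> B psi ->
  (forall n, phi (e n) = psi (e n)) -> phi = psi.
Proof.
move=> Bphi Bpsi h; apply/funext => g.
have [g1|g1] := pselect (L1set L c g); last by rewrite !B_out.
apply/eqP; rewrite -subr_eq0; apply/eqP/abs_small_eq0 => eps eps0.
have eps30 : 0 < eps / 3 by apply: divr_gt0.
have [n hn] := coord_close Bphi Bpsi g1 eps30.
apply/ltW; rewrite (_ : eps = eps / 3 + eps / 3 + eps / 3); last by field.
by apply: hn; rewrite h subrr normr0.
Qed.

Lemma near_coord (phi : T) (u : Omega -> R) eps : 0 < eps ->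
  nbhs phi [set psi : T | `|phi u - psi u| < eps].
Proof.
move=> eps0; have := @proj_continuous (Omega -> R) (fun _ => R) u phi.
by move=> /(_ (ball (phi u) eps) (nbhsx_ballx _ _ eps0)).
Qed.


Lemma B_compact : compact (B : set T).
Proof.
pose A (g : Omega -> R) : set R := if pselect (L1set L c g) then
  `[- fine (cap_ext L c g), fine (cap_ext L c g)]%classic else [set 0].
pose C := [set phi : T | forall a g h, L1set L c g -> L1set L c h ->
  phi (fun x => a * g x + h x) = a * phi g + phi h].
have -> : (B : set T) = [set f : T | forall i, A i (f i)] `&` C.
  apply/seteqP; split.
  - move=> phi Bphi; split; last by move=> a g h; apply: B_lin.
    move=> g; rewrite /A; case: pselect => g1; last by rewrite B_out.
    have := B_bnd Bphi g1; have fg := cap_ext_fin hL hc g1.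
    by rewrite -(fineK fg) lee_fin /= in_itv /= -ler_norml.
  - move=> phi [hA hC]; split.
    + by move=> a g h; apply: hC.
    + move=> g g1; have := hA g; rewrite /A; case: (pselect (L1set L c g)) => [?|/(_ g1)//].
      have fg := cap_ext_fin hL hc g1.
      by rewrite /= in_itv /= -ler_norml -(fineK fg) lee_fin.
    + by move=> g g1; have := hA g; rewrite /A; case: pselect.
apply: compact_closedI.
  apply: tychonoff => g; rewrite /A; case: pselect => ?.
    exact: segment_compact.
  exact: compact_set1.
move=> phi clphi a g h g1 h1.
apply/eqP; rewrite -subr_eq0; apply/eqP/abs_small_eq0 => eps eps0.
have a20 : 0 < `|a| + 2 by apply: ltr_wpDl.
pose eta := eps / (`|a| + 2).
have eta0 : 0 < eta by apply: divr_gt0.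
have [psi [Cpsi [hu [hg hh]]]] := clphi _ (filterI (near_coord phi (fun x => a * g x + h x) eta0)
  (filterI (near_coord phi g eta0) (near_coord phi h eta0))).
have E := Cpsi a g h g1 h1.
have k1 : `|a * (phi g - psi g)| <= `|a| * eta.
  by rewrite normrM ler_wpM2l // ltW.
have epsE : eps = `|a| * eta + eta + eta by rewrite /eta; field; rewrite gt_eqF.
rewrite (_ : _ - _ = (phi (fun x => a * g x + h x) - psi (fun x => a * g x + h x))
   - a * (phi g - psi g) - (phi h - psi h)); last by rewrite E; ring.
apply: le_trans (ler_normB _ _) _; apply: le_trans (lerD (ler_normB _ _) (lexx _)) _.
move: hu hh k1 => /= hu hh k1.
rewrite epsE; lra.
Qed.

Definition dist (phi psi : (Omega -> R) -> R) : R :=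
  sup [set Num.min (n.+1%:R^-1) `|phi (e n) - psi (e n)| | n in [set: nat]].

Lemma dist_ubound (phi psi : (Omega -> R) -> R) :
  has_ubound [set Num.min (n.+1%:R^-1) `|phi (e n) - psi (e n)| | n in [set: nat]].
Proof.
exists 1 => _ [n _ <-]; rewrite ge_min; apply/orP; left.
by rewrite invr_le1 // ?ler1n // unitfE pnatr_eq0.
Qed.

Lemma dist_ub (phi psi : (Omega -> R) -> R) n :
  Num.min (n.+1%:R^-1) `|phi (e n) - psi (e n)| <= dist phi psi.
Proof. by apply: ub_le_sup; [exact: dist_ubound | exists n]. Qed.

Lemma dist_le (phi psi : (Omega -> R) -> R) x :
  (forall n, Num.min (n.+1%:R^-1) `|phi (e n) - psi (e n)| <= x) -> dist phi psi <= x.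
Proof. by move=> h; apply: ge_sup; [exists (Num.min 1%:R^-1 `|phi (e 0) - psi (e 0)|), 0%N | move=> _ [n _ <-]]. Qed.

Lemma dist_ge0 (phi psi : (Omega -> R) -> R) : 0 <= dist phi psi.
Proof.
apply: le_trans (dist_ub phi psi 0); rewrite le_min invr_ge0 ler0n /=.
exact: normr_ge0.
Qed.

Lemma dist_xx (phi : (Omega -> R) -> R) : dist phi phi = 0.
Proof.
apply/eqP; rewrite eq_le dist_ge0 andbT; apply: dist_le => n.
by rewrite subrr normr0 ge_min lexx orbT.
Qed.

Lemma dist_sym (phi psi : (Omega -> R) -> R) : dist phi psi = dist psi phi.
Proof.
rewrite /dist; congr sup; apply/seteqP; split => _ [n _ <-]; exists n => //;
  by rewrite distrC.
Qed.

Lemma min_tri (w a b : R) : 0 <= w ->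
  Num.min w `|a + b| <= Num.min w `|a| + Num.min w `|b|.
Proof.
move=> w0; have na := normr_ge0 a; have nb := normr_ge0 b.
have nab := ler_normD a b.
have h1 : Num.min w `|a + b| <= w by rewrite ge_min lexx.
have h2 : Num.min w `|a + b| <= `|a + b| by rewrite ge_min lexx orbT.
move: h1 h2; case: (leP w `|a|) => ha; case: (leP w `|b|) => hb; lra.
Qed.

Lemma dist_tri (phi psi chi : (Omega -> R) -> R) : dist phi chi <= dist phi psi + dist psi chi.
Proof.
apply: dist_le => n; apply: le_trans (lerD (dist_ub phi psi n) (dist_ub psi chi n)).
rewrite (_ : phi (e n) - chi (e n) = (phi (e n) - psi (e n)) + (psi (e n) - chi (e n))).
  by apply: min_tri; rewrite invr_ge0 ler0n.
by ring.
Qed.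

Lemma dist0 (phi psi : (Omega -> R) -> R) : B phi -> B psi -> dist phi psi = 0 -> phi = psi.
Proof.
move=> Bphi Bpsi d0; apply: B_eq => // n.
have := dist_ub phi psi n; rewrite d0 ge_min => /orP [|].
  by rewrite leNgt invr_gt0 ltr0n.
by rewrite normr_le0 subr_eq0 => /eqP.
Qed.

Lemma dist_small (phi psi : (Omega -> R) -> R) n eta : dist phi psi < Num.min (n.+1%:R^-1) eta ->
  `|phi (e n) - psi (e n)| < eta.
Proof.
have h := dist_ub phi psi n; rewrite lt_min => /andP [h1 h2].
case: (leP (n.+1%:R^-1) `|phi (e n) - psi (e n)|) => hw.
  by rewrite min_l // in h; move: (le_lt_trans h h1); rewrite ltxx.
have h' : Num.min (n.+1%:R^-1) `|phi (e n) - psi (e n)| = `|phi (e n) - psi (e n)|.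
  by rewrite min_r // ltW.
rewrite h' in h; lra.
Qed.

Lemma ptws_cvg (F : set_system T) (phi : T) : Filter F ->
  (forall t, (fun g : T => g t) @ F --> phi t) -> F --> phi.
Proof.
move=> FF h.
have := @pointwise_cvgP (discrete_topology (Omega -> R)) R F phi FF.
by move=> [_ H]; apply: H.
Qed.

Lemma B_metrizable : metrizable_subset (R := R) (B : set T).
Proof.
exists dist; split.
- by move=> x y Bx By; split; [exact: dist0 | move=> ->; exact: dist_xx].
- by move=> x y _ _; exact: dist_sym.
- by move=> x y z _ _ _; exact: dist_tri.
move=> phi U Bphi; split.
  case=> V [oV Vphi VU].
  pose F := filter_from [set eps : R | 0 < eps]
    (fun eps => [set psi : T | B psi /\ dist phi psi < eps]).
  have FF : Filter F.
    apply: filter_from_filter; first by exists 1%R; rewrite /= ltr01.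
    move=> i j i0 j0; exists (Num.min i j); first by rewrite /= lt_min i0 j0.
    by move=> psi [Bpsi]; rewrite lt_min => /andP [h1 h2].
  have cvgF : F --> phi.
    apply: ptws_cvg => t; apply/cvgrPdist_lt => eta eta0.
    have [t1|t1] := pselect (L1set L c t); last first.
      exists 1 => //= psi [Bpsi _]; by rewrite !B_out // subrr normr0.
    have eta30 : 0 < eta / 3 by apply: divr_gt0.
    have [n hn] := approx_n t1 eta30.
    exists (Num.min (n.+1%:R^-1) (eta / 3)).
      by rewrite /= lt_min eta30 invr_gt0 ltr0n.
    move=> psi [Bpsi dpsi] /=.
    have h3 := dist_small dpsi.
    have h1 := le_lt_trans (B_diff Bphi t1 (eL n)) hn.
    have h2 := le_lt_trans (B_diff Bpsi t1 (eL n)) hn.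
    rewrite lte_fin in h1; rewrite lte_fin in h2.
    move: h1 h2 h3; rewrite !ltr_norml => /andP[h1 h1'] /andP[h2 h2'] /andP[h3 h3'].
    apply/andP; split; lra.
  have [eps eps0 hsub] := cvgF V (open_nbhs_nbhs (conj oV Vphi)).
  exists eps => // psi [Bpsi dpsi]; apply: VU; split => //.
  by apply: hsub.
case=> eps eps0 sub.
have eps20 : 0 < eps / 2 by apply: divr_gt0.
have [K hK] := ltr_add_invr eps20; rewrite add0r in hK.
have nW : forall m, nbhs phi
    [set psi : T | forall n, (n < m)%N -> `|phi (e n) - psi (e n)| < eps / 2].
  elim => [|m IH]; first by apply: filterS filterT => psi _ n.
  apply: filterS (filterI IH (near_coord phi (e m) eps20)).
  move=> psi [h1 h2] n; rewrite ltnS leq_eqVlt => /orP [/eqP -> //|]; exact: h1.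
pose W := [set psi : T | forall n, (n < K.+1)%N ->
   `|phi (e n) - psi (e n)| < eps / 2].
exists (interior W).
split.
- exact: open_interior.
- exact: nW.
move=> psi [/interior_subset Wpsi Bpsi]; apply: sub; split => //.
apply: le_lt_trans (dist_le (x := eps / 2) _) _; last by lra.
move=> n; case: (ltnP n K.+1) => hn.
  by rewrite ge_min; apply/orP; right; apply: ltW; exact: Wpsi.
rewrite ge_min; apply/orP; left; apply: ltW; apply: le_lt_trans hK.
rewrite lef_pV2 ?posrE ?ltr0n // ler_nat; exact: leqW.
Qed.

End Dual.


Unset Implicit Arguments.

Theorem proposition2p10 (R : realType) (Omega : pseudoMetricType R)
  (L : set (Omega -> R)) (c : (Omega -> R) -> R) :
  hausdorff_space Omega -> compact [set: Omega] ->
  admissible_space L -> capacity L c ->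
  (exists D : set (Omega -> R),
     [/\ countable D, D `<=` L1set L c &
         forall g, L1set L c g -> forall e : R, 0 < e ->
           exists2 d, D d & (cap_ext L c (fun x => g x - d x)%R < e%:E)%E])
  /\ (compact (dual_unit_ball L c : set {ptws (Omega -> R) -> R})
      /\ metrizable_subset (R := R)
           (dual_unit_ball L c : set {ptws (Omega -> R) -> R})).
Proof.
move=> _ hK hL hc.
have Lcont : forall f, L f -> continuous f.
  by case: hL => h _ _ _ _ f /h [].
have [e [eL edense]] := dense_seq hK Lcont (L_cst hL 0).
split.
  exists (range e); split.
  - exact: card_image_le.
  - by move=> _ [n _ <-]; apply: (L_in_L1 hL hc).
  - move=> g g1 eps eps0.
    have [n hn] := approx_n hL hc edense g1 eps0.
    by exists (e n) => //; exists n.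
split; first exact: (B_compact hL hc).
exact: (B_metrizable hL hc eL edense).
Qed.
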